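(* For all positive integers $n$ and $k$ with $k\le 2^n$, we have $v_2\big(H(2^n,k)\big)\le -n$.
   Context: For positive integers $N\ge k$, $H(N,k)=\sum_{1\le i_1<\cdots<i_k\le N}\frac{1}{i_1\cdots i_k}$ is the $k$-th elementary symmetric function of $1,\frac12,\dots,\frac1N$. For a nonzero rational $x=n_1/n_2$ with integers $n_1,n_2$, $v_2(x)=v_2(n_1)-v_2(n_2)$, where $v_2$ is the $2$-adic valuation. *)

(* Defs.v *)
From HB Require Import structures.
From mathcomp Require Import all_boot all_order all_algebra.
Set Implicit Arguments. Unset Strict Implicit. Unset Printing Implicit Defensive.
Import Order.TTheory GRing.Theory Num.Theory.
Local Open Scope ring_scope.

(* H(N,k) = sum over k-subsets {i_1<...<i_k} of {1..N} of 1/(i_1...i_k).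
   Index i : 'I_N represents the integer i+1. *)
Definition H (N k : nat) : rat :=
  \sum_(A : {set 'I_N} | #|A| == k) \prod_(i in A) ((i.+1)%:R)^-1.

(* 2-adic valuation of a rational x = numq x / denq x (reduced form):
   v_2(x) = v_2(numq x) - v_2(denq x). Meaningful for x <> 0. *)
Definition v2 (x : rat) : int :=
  (logn 2 `|numq x|%N)%:Z - (logn 2 `|denq x|%N)%:Z.

(* Main.v *)
Require Import Defs.
From HB Require Import structures.
From mathcomp Require Import all_boot all_order all_algebra.
From mathcomp Require Import zify ring.
Import Order.TTheory GRing.Theory Num.Theory.
Local Open Scope ring_scope.
Module VV.
Set Implicit Arguments. Unset Strict Implicit. Unset Printing Implicit Defensive.

Definition lv (x : int) : nat := logn 2 `|x|%N.
Definition dv (e : nat) (x : int) : bool := ((2 ^ e)%N%:Z %| x)%Z.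
Definition xv (e : nat) (x : int) : Prop := x != 0 /\ lv x = e.

Lemma dvP e x : x != 0 -> dv e x = (e <= lv x)%N.
Proof.
move=> x0; rewrite /dv dvdzE /lv /= -pfactor_dvdn //.
by rewrite absz_gt0.
Qed.

Lemma dv0 e : dv e 0. Proof. exact: dvdz0. Qed.
Lemma dvD e x y : dv e x -> dv e y -> dv e (x + y).
Proof. exact: rpredD. Qed.
Lemma dvN e x : dv e (- x) = dv e x.
Proof. by rewrite /dv rpredN. Qed.
Lemma dvM e f x y : dv e x -> dv f y -> dv (e + f) (x * y).
Proof.
rewrite /dv expnD PoszM => h1 h2; exact: dvdz_mul.
Qed.
Lemma dvMl e x y : dv e x -> dv e (x * y).
Proof. by move=> h; rewrite /dv dvdz_mulr. Qed.
Lemma dvMr e x y : dv e y -> dv e (x * y).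
Proof. by move=> h; rewrite /dv dvdz_mull. Qed.
Lemma dvW e f x : (e <= f)%N -> dv f x -> dv e x.
Proof.
move=> ef; apply: dvdz_trans; rewrite dvdzE /= dvdn_exp2l //.
Qed.
Lemma ex_dv e x : xv e x -> dv e x.
Proof. by case=> x0 <-; rewrite dvP. Qed.
Lemma ex_ndv e x : xv e x -> ~~ dv e.+1 x.
Proof. by case=> x0 <-; rewrite dvP // ltnn. Qed.
Lemma exP e x : xv e x <-> dv e x /\ ~~ dv e.+1 x.
Proof.
split; first by move=> h; split; [apply: ex_dv|apply: ex_ndv].
case=> h1 h2; have x0 : x != 0 by apply: contraNneq h2 => ->; exact: dv0.
by split=> //; move: h1 h2; rewrite !dvP // => a b; apply/eqP; rewrite eqn_leq a andbT leqNgt.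
Qed.
Lemma exM e f x y : xv e x -> xv f y -> xv (e + f) (x * y).
Proof.
case=> x0 <- [y0 <-]; split; first by rewrite mulf_neq0.
by rewrite /lv abszM lognM // absz_gt0.
Qed.
Lemma exD e x y : xv e x -> dv e.+1 y -> xv e (x + y).
Proof.
move=> /exP [h1 h2] h3; apply/exP; split; first exact: dvD (dvW (leqnSn _) h3).
apply: contra h2 => h4; rewrite -dvN in h3; have := dvD h4 h3.
by rewrite addrK.
Qed.
Lemma dv_sum I (r : seq I) (P : pred I) (F : I -> int) e :
  (forall i, P i -> dv e (F i)) -> dv e (\sum_(i <- r | P i) F i).
Proof. move=> h; elim/big_rec: _ => [|i x Pi hx]; [exact: dv0| exact: dvD (h i Pi) hx]. Qed.
Lemma ex_sum m (F : 'I_m -> int) (j : 'I_m) e :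
  xv e (F j) -> (forall i, i != j -> dv e.+1 (F i)) -> xv e (\sum_(i < m) F i).
Proof.
move=> hj ho; rewrite (bigD1 j) //=; apply: exD hj _.
by apply: dv_sum => i; apply: ho.
Qed.
Lemma lv_nat n : lv n%:Z = logn 2 n. Proof. by []. Qed.
Lemma ex_nat n : (0 < n)%N -> xv (logn 2 n) n%:Z.
Proof. by move=> n0; split; rewrite // eqz_nat -lt0n. Qed.
Lemma exN e x : xv e (- x) <-> xv e x.
Proof. by rewrite /xv /lv abszN oppr_eq0. Qed.
Lemma dv_nat e n : (0 < n)%N -> dv e n%:Z = (e <= logn 2 n)%N.
Proof. by move=> n0; rewrite dvP // eqz_nat -lt0n. Qed.

End VV.
Import VV.

Module BA.
Set Implicit Arguments. Unset Strict Implicit. Unset Printing Implicit Defensive.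
Local Open Scope nat_scope.

Lemma logn2_odd c : odd c -> logn 2 c = 0.
Proof. by move=> oc; apply: logn_coprime; rewrite coprime2n. Qed.

Lemma bin2p_even p j : 0 < j < 2 ^ p -> ~~ odd 'C(2 ^ p, j).
Proof.
case: j => [|j] // /andP [_ jlt].
have := mul_bin_diag (2 ^ p) j; rewrite -subn1 => e.
apply/negP => oc.
have : 2 ^ p %| j.+1 * 'C(2 ^ p, j.+1) by rewrite -e dvdn_mulr.
rewrite Gauss_dvdl; last by rewrite coprimeXl // coprime2n.
by move/dvdn_leq => /(_ isT); rewrite leqNgt jlt.
Qed.

Lemma bin2p1_odd p i : i < 2 ^ p -> odd 'C(2 ^ p - 1, i).
Proof.
elim: i => [|i IH] lt; first by rewrite bin0.
have h := @bin2p_even p i.+1; rewrite lt /= in h.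
have e : 2 ^ p = (2 ^ p - 1).+1 by rewrite subn1 prednK // expn_gt0.
move: h; rewrite {1}e binS oddD (IH (ltnW lt)) /=.
by move/(_ isT); rewrite addbT negbK.
Qed.

Lemma logn_bin2p p b : 0 < b <= 2 ^ p -> logn 2 b + logn 2 'C(2 ^ p, b) = p.
Proof.
case: b => [|b] // /andP [_ blt].
have := mul_bin_diag (2 ^ p) b; rewrite -subn1 => e.
have C0 : 0 < 'C(2 ^ p, b.+1) by rewrite bin_gt0.
rewrite -lognM // -e lognM ?expn_gt0 //; last first.
  by rewrite odd_gt0 // bin2p1_odd.
by rewrite pfactorK // logn2_odd ?bin2p1_odd // addn0.
Qed.


Definition lg m := trunc_log 2 m.
Definition g m := (2 * lg m + 4) * m - 4 * 2 ^ lg m.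
Definition dev m := lg m - logn 2 m.
Definition T s := g s.+1 + dev s.+1.

Lemma lg_lb m : 0 < m -> 2 ^ lg m <= m.
Proof. by move=> m0; apply: trunc_logP. Qed.
Lemma lg_ub m : m < 2 ^ (lg m).+1.
Proof. exact: trunc_log_ltn. Qed.
Lemma lg_eq m k : 2 ^ k <= m < 2 ^ k.+1 -> lg m = k.
Proof. by move=> h; apply: trunc_log_eq. Qed.
Lemma lgX k : lg (2 ^ k) = k.
Proof. by apply: lg_eq; rewrite leqnn /= ltn_exp2l. Qed.
Lemma v2_le m : 0 < m -> 2 ^ logn 2 m <= m.
Proof. by move=> m0; apply: dvdn_leq m0 (pfactor_dvdnn _ _). Qed.
Lemma v2_lg m : 0 < m -> logn 2 m <= lg m.
Proof. by move=> m0; apply: trunc_log_max => //; apply: v2_le. Qed.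
Lemma lt_2X k : k < 2 ^ k.
Proof. by elim: k => // k IH; rewrite expnS; lia. Qed.
Lemma v2_ltn m : 0 < m -> logn 2 m < m.
Proof. by move=> m0; apply: leq_trans (lt_2X _) (v2_le m0). Qed.
Lemma lg_mono m k : m <= k -> lg m <= lg k.
Proof.
case: m => [|m] mk; first by rewrite /lg trunc_log0.
by apply: trunc_log_max => //; apply: leq_trans (lg_lb _) mk.
Qed.
Lemma lg_lt m k : 0 < m -> m < 2 ^ k -> lg m < k.
Proof.
move=> m0 mk; have := leq_ltn_trans (lg_lb m0) mk.
by rewrite ltn_exp2l.
Qed.

Lemma gS m : 0 < m -> g m.+1 = g m + 2 * lg m + 4.
Proof.
move=> m0; rewrite /g.
have lb := lg_lb m0; have ub := lg_ub m.
have [e|ne] := eqVneq m.+1 (2 ^ (lg m).+1).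
  have E : m.+1 = 2 * 2 ^ lg m by rewrite e expnS.
  rewrite e lgX expnS -E; move: E; set L := lg m; set x := 2 ^ L => E; nia.
have e : lg m.+1 = lg m.
  apply: lg_eq; rewrite (leq_trans lb) //=; move: ub ne; rewrite leq_eqVlt.
  by case: (m.+1 == _) => //.
rewrite e; move: lb; set L := lg m; set x := 2 ^ L => lb; nia.
Qed.

Lemma dev_le m : dev m <= lg m.
Proof. by rewrite /dev leq_subr. Qed.

Lemma T_S s : T s + lg s.+1 + 4 <= T s.+1.
Proof.
rewrite /T (@gS s.+1) // ; have := dev_le s.+1; lia.
Qed.

Lemma T_mono s t : s <= t -> T s <= T t.
Proof.
move=> /subnK <-; elim: (t - s) => [|d IH]; first by rewrite add0n.
apply: leq_trans IH _; have := T_S (d + s); rewrite addSn; lia.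
Qed.

Lemma g_slope m d : 0 < m -> g (m + d) <= g m + d * (2 * lg (m + d).-1 + 4).
Proof.
move=> m0; elim: d => [|d IH]; first by rewrite addn0 mul0n addn0.
rewrite addnS gS; last by lia.
have h1 : lg (m + d).-1 <= lg (m + d) by apply: lg_mono; lia.
have h2 : d * lg (m + d).-1 <= d * lg (m + d) by apply: leq_mul.
rewrite -pred_Sn; lia.
Qed.

Lemma v2_le_lg m : 0 < m -> logn 2 m <= lg m. Proof. exact: v2_lg. Qed.

Lemma ineq_bot p s b : s < 2 ^ p -> 0 < b <= s ->
  T s < T (s - b) + 2 * (p + 2) * b + (p - logn 2 b).
Proof.
move=> sp /andP [b0 bs].
have e : s.+1 = (s - b).+1 + b by lia.
have hg := g_slope b (ltn0Sn (s - b)); rewrite -e /= in hg.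
have ls : lg s < p by apply: lg_lt => //; lia.
have lm : lg s.+1 <= p by rewrite -ltnS; apply: lg_lt => //; rewrite expnS; lia.
have hb : b * (lg s).+1 <= b * p by apply: leq_mul.
have vb : logn 2 b < b by apply: v2_ltn.
have vbp : logn 2 b <= p by have := v2_lg b0; have := lg_mono bs; lia.
have := dev_le s.+1; rewrite /T; lia.
Qed.

Lemma v2_lt_p p b : 0 < b < 2 ^ p -> logn 2 b < p.
Proof.
move=> /andP [b0 bp]; have := leq_ltn_trans (v2_le b0) bp.
by rewrite ltn_exp2l.
Qed.

Lemma v2_add p b : 0 < b < 2 ^ p -> logn 2 (2 ^ p + b) = logn 2 b.
Proof.
move=> hb; have b0 : 0 < b by case/andP: hb.
have h1 := ex_nat b0.
have h2 : dv (logn 2 b).+1 (2 ^ p)%N%:Z by rewrite dv_nat ?expn_gt0 // pfactorK // v2_lt_p.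
by have [_ <-] := exD h1 h2; rewrite -PoszD addnC.
Qed.

Lemma v2_sub p d : 0 < d < 2 ^ p -> logn 2 (2 ^ p - d) = logn 2 d.
Proof.
move=> hd; have d0 : 0 < d by case/andP: hd.
have h1 : xv (logn 2 d) (- d%:Z)%R by apply/exN; apply: ex_nat.
have h2 : dv (logn 2 d).+1 (2 ^ p)%N%:Z by rewrite dv_nat ?expn_gt0 // pfactorK // v2_lt_p.
have [_ <-] := exD h1 h2.
by rewrite [(- _ + _)%R]GRing.addrC subzn //; case/andP: hd => _ /ltnW.
Qed.

Lemma T_pow p : T (2 ^ p - 1) = 2 * p * 2 ^ p.
Proof.
rewrite /T subn1 prednK ?expn_gt0 // /dev /g lgX pfactorK // subnn addn0.
lia.
Qed.

Lemma ineq_topeq p b0 : 0 < b0 <= 2 ^ p ->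
  T (2 ^ p - 1 + b0) = T (2 ^ p - 1) + 2 * (p + 2) * b0 + (p - logn 2 b0).
Proof.
move=> /andP [b00 b0p]; rewrite T_pow.
have e : (2 ^ p - 1 + b0).+1 = 2 ^ p + b0 by have := expn_gt0 2 p; lia.
rewrite /T e /g /dev.
case: (ltnP b0 (2 ^ p)) => hb.
  have l : lg (2 ^ p + b0) = p by apply: lg_eq; rewrite expnS; lia.
  rewrite l v2_add ?b00 //.
  have := v2_lt_p (b := b0) (p := p); rewrite b00 hb => /(_ isT) vl.
  nia.
have -> : b0 = 2 ^ p by apply/eqP; rewrite eqn_leq b0p hb.
rewrite addnn -mul2n -expnS lgX pfactorK // subnn pfactorK // subnn addn0 expnS.
nia.
Qed.

Lemma lg_pred q : lg (2 ^ q.+1).-1 = q.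
Proof.
apply: lg_eq; have := expn_gt0 2 q; rewrite expnS; lia.
Qed.

Lemma k_le_2X k : k.+1 <= 2 ^ k.
Proof. exact: lt_2X. Qed.

Lemma ineq_topstr p a b : a < 2 ^ p - 1 -> 2 ^ p - 1 < a + b -> b <= 2 ^ p ->
  T (a + b) < T a + 2 * (p + 2) * b + (p - logn 2 b).
Proof.
move=> ha hab hb.
have P0 : 0 < 2 ^ p := expn_gt0 2 p.
have [q eq] : exists q, p = q.+1 by case: p ha {hab hb P0} => [|q]; [|exists q].
set d := 2 ^ p - 1 - a.
set b0 := a + b - (2 ^ p - 1).
have eb : b = b0 + d by rewrite /b0 /d; lia.
have e1 : a + b = 2 ^ p - 1 + b0 by rewrite /b0; lia.
have b0pos : 0 < b0 <= 2 ^ p by rewrite /b0; lia.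
have := ineq_topeq b0pos; rewrite -e1 => ->.
have hg := g_slope d (ltn0Sn a).
have ea : a.+1 + d = 2 ^ p by rewrite /d; lia.
have lp : lg (2 ^ p).-1 = q by rewrite eq lg_pred.
rewrite ea lp in hg.
have TA : T (2 ^ p - 1) = g (2 ^ p).
  by rewrite /T subn1 prednK // /dev lgX pfactorK // subnn addn0.
have d0 : 0 < d < 2 ^ p by rewrite /d; lia.
have vb : logn 2 b <= p.
  have b00 : 0 < b by lia.
  by have := v2_lg b00; have := lg_mono hb; rewrite lgX; lia.
have vb0 : logn 2 b0 <= p.
  have b00 : 0 < b0 by lia.
  by have := v2_lg b00; have := lg_mono (proj2 (andP b0pos)); rewrite lgX; lia.
have key : p < 2 * d + dev a.+1.
  case: (ltnP (2 ^ p) (2 * d)) => hd.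
    by have := lt_2X p; lia.
  have la : q <= lg a.+1.
    apply: trunc_log_max => //; move: hd; rewrite /d eq expnS; lia.
  have va : logn 2 a.+1 = logn 2 d.
    by rewrite -(v2_sub d0); congr logn; rewrite /d; lia.
  have vd := v2_le (proj1 (andP d0)).
  have := k_le_2X (logn 2 d).
  rewrite /dev va; lia.
rewrite TA /T eb; lia.
Qed.

Lemma T_bound n s : 0 < n -> s < 2 ^ n.-1 -> T s <= 2 * n * s.
Proof.
move=> n0 sn; rewrite /T /g /dev.
have m0 : 0 < s.+1 by [].
have lb := lg_lb m0.
have dl := dev_le s.+1; rewrite /dev in dl.
case: (ltnP s.+1 (2 ^ n.-1)) => hs.
  have lJ : lg s.+1 < n.-1 by apply: lg_lt.
  have k2 := k_le_2X (lg s.+1).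
  move: lb k2 lJ dl; set J := lg s.+1; set x := 2 ^ J => lb k2 lJ dl.
  have h1 : (2 * n - 2 * J - 4) * x <= (2 * n - 2 * J - 4) * s.+1 by apply: leq_mul.
  have h2 : (2 * n - 2 * J) * J.+1 <= (2 * n - 2 * J) * x by apply: leq_mul.
  nia.
have e : s.+1 = 2 ^ n.-1 by apply/eqP; rewrite eqn_leq sn hs.
rewrite e lgX pfactorK // subnn addn0.
have := lt_2X n.-1; move: e; set x := 2 ^ n.-1 => e h.
nia.
Qed.

End BA.
Import BA.

Module PS.
Set Implicit Arguments. Unset Strict Implicit. Unset Printing Implicit Defensive.

Lemma coef_XaddC_exp (R : comNzRingType) (c : R) n i :
  (('X + c%:P) ^+ n)`_i = c ^+ (n - i) *+ 'C(n, i).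
Proof.
elim: n i => [|n IH] i.
  by rewrite expr0 coef1 bin0n; case: i => [|i] /=; rewrite ?expr0 ?mulr1n ?mulr0n.
rewrite exprSr mulrDr coefD coefMX coefMC !IH.
case: i => [|i] /=; first by rewrite !bin0 !subn0 add0r !mulr1n exprSr.
rewrite subSS binS mulrnDr addrC; congr (_ + _).
case: (ltnP i n) => hin.
  by rewrite mulrnAl -exprSr subnSK.
by rewrite !bin_small ?mulr0n ?mul0r // ltnS.
Qed.

Lemma prod_perturb I (r : seq I) (f c : I -> {poly int}) (d : {poly int}) :
  exists Y, \prod_(l <- r) (f l + d * c l) = \prod_(l <- r) f l + d * Y.
Proof.
elim: r => [|a r [Y IH]]; first by exists 0; rewrite !big_nil mulr0 addr0.
exists (Y * f a + (\prod_(l <- r) f l) * c a + d * Y * c a).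
rewrite !big_cons IH; ring.
Qed.

Lemma polyC2X q : ((2 ^ q.+1)%N%:Z)%:P = 2 * ((2 ^ q)%N%:Z)%:P :> {poly int}.
Proof. by rewrite expnS PoszM polyCM -natz polyC_natr. Qed.

Definition oddsq (l : nat) : {poly int} := 'X - (((2 * l + 1) ^ 2)%N%:Z)%:P.

Lemma cong_oddsq q : exists Y,
  \prod_(0 <= l < 2 ^ q) oddsq l = ('X - 1) ^+ (2 ^ q) + ((2 ^ q.+1)%N%:Z)%:P * Y.
Proof.
elim: q => [|q [Y IH]].
  by exists 0; rewrite expn0 big_nat1 /oddsq mulr0 addr0 expr1.
have e : (2 ^ q.+1 = 2 ^ q + 2 ^ q)%N by rewrite expnS mul2n addnn.
rewrite e (big_cat_nat _ (leq_addr _ _)) //=.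
rewrite -{2}(add0n (2 ^ q)%N) big_addn addnK.
have ef l : oddsq (l + 2 ^ q)%N = oddsq l + ((2 ^ q.+2)%N%:Z)%:P * (- (((2 * l + 1 + 2 ^ q)%N%:Z)%:P)).
  rewrite /oddsq.
  have -> : (((2 * (l + 2 ^ q) + 1) ^ 2)%N%:Z) = ((2 * l + 1) ^ 2)%N%:Z + (2 ^ q.+2)%N%:Z * (2 * l + 1 + 2 ^ q)%N%:Z.
    by rewrite -PoszM -PoszD; congr Posz; rewrite !expnS; set x := (2 ^ q)%N; nia.
  rewrite polyCD polyCM; ring.
have [Y' HY] := prod_perturb (index_iota 0 (2 ^ q)) oddsq (fun l => - (((2 * l + 1 + 2 ^ q)%N%:Z)%:P)) ((2 ^ q.+2)%N%:Z)%:P.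
have -> : \prod_(0 <= i < 2 ^ q) oddsq (i + 2 ^ q)%N = \prod_(0 <= i < 2 ^ q) oddsq i + ((2 ^ q.+2)%N%:Z)%:P * Y'.
  by rewrite -HY; apply: eq_bigr => i _; exact: ef.
rewrite IH.
set A := ('X - 1) ^+ (2 ^ q).
exists (A * Y + ((2 ^ q)%N%:Z)%:P * Y ^+ 2 + (A + ((2 ^ q.+1)%N%:Z)%:P * Y) * Y').
rewrite exprD /A.
rewrite !polyC2X.
set xP := ((2 ^ q)%N%:Z)%:P.
ring.
Qed.


Lemma size_prod_XaddC I (r : seq I) (d : I -> int) :
  size (\prod_(l <- r) ('X + (d l)%:P)) = (size r).+1.
Proof.
rewrite (eq_bigr (fun l => 'X - (- d l)%:P)) ?size_prod_XsubC // => l _.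
by rewrite polyCN opprK.
Qed.

Lemma coef_prod_XaddC_big I (r : seq I) (d : I -> int) a :
  (size r < a)%N -> (\prod_(l <- r) ('X + (d l)%:P))`_a = 0.
Proof. by move=> h; rewrite nth_default // size_prod_XaddC. Qed.

Lemma coef_scale I (r : seq I) (w : I -> int) (c : int) a : (a <= size r)%N ->
  (\prod_(l <- r) ('X + (c * w l)%:P))`_a = c ^+ (size r - a) * (\prod_(l <- r) ('X + (w l)%:P))`_a.
Proof.
elim: r a => [|x r IH] a /=.
  by rewrite leqn0 => /eqP ->; rewrite !big_nil expr0 mul1r.
move=> ha; rewrite !big_cons !mulrDl !coefD !coefXM !coefCM.
case: a ha => [|a] ha /=.
  by rewrite !add0r IH // subn0 exprS; ring.
rewrite subSS.
case: (ltnP a (size r)) => har.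
  rewrite IH ?(ltnW har) // IH // -(subnSK har) exprS; ring.
have -> : a = size r by apply/eqP; rewrite eqn_leq har -ltnS ha.
have z1 : (\prod_(l <- r) ('X + (c * w l)%:P))`_(size r).+1 = 0 by apply: coef_prod_XaddC_big.
have z2 : (\prod_(l <- r) ('X + (w l)%:P))`_(size r).+1 = 0 by apply: coef_prod_XaddC_big.
rewrite z1 z2 IH // subnn; ring.
Qed.

Lemma prod_parity (R : comNzRingType) m (F : nat -> R) : (0 < m)%N ->
  \prod_(1 <= i < 2 * m) F i = \prod_(1 <= l < m) F (2 * l)%N * \prod_(0 <= l < m) F (2 * l + 1)%N.
Proof.
elim: m => [|m IH] // _.
case: m IH => [|m] IH.
  by rewrite muln1 big_nat1 big_geq // big_nat1 mul1r.
have e : (2 * m.+2 = (2 * m.+1).+1.+1)%N by lia.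
rewrite e (big_nat_recr (2 * m.+1).+1) /=; last by lia.
rewrite (big_nat_recr (2 * m.+1)) /=; last by lia.
rewrite (big_nat_recr m.+1 1) //= (big_nat_recr m.+1 0) //= IH //.
have e1 : (2 * m.+1 + 1 = (2 * m.+1).+1)%N by lia.
rewrite e1; ring.
Qed.


Definition Sp p : {poly int} :=
  \prod_(1 <= i < 2 ^ p) ('X + ((i * (2 ^ p.+1 - i))%N%:Z)%:P).
Definition Ep p : {poly int} :=
  \prod_(1 <= l < 2 ^ p) ('X + (4 * (l * (2 ^ p.+1 - l))%N%:Z)%:P).
Definition Rp p : {poly int} :=
  \prod_(0 <= l < 2 ^ p) ('X + (((2 * l + 1) * (2 ^ p.+2 - (2 * l + 1)))%N%:Z)%:P).

Lemma S_split p : Sp p.+1 = Ep p * Rp p.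
Proof.
rewrite /Sp expnS prod_parity ?expn_gt0 //; congr (_ * _).
apply: eq_bigr => l _; congr ('X + _%:P).
rewrite -PoszM; congr Posz; rewrite !expnS; lia.
Qed.

Lemma R_cong p : exists Y, Rp p = ('X - 1) ^+ (2 ^ p) + ((2 ^ p.+1)%N%:Z)%:P * Y.
Proof.
have [Y HY] := cong_oddsq p.
have [Y1 HY1] := prod_perturb (index_iota 0 (2 ^ p)) oddsq (fun l => ((2 * l + 1)%N%:Z)%:P) ((2 ^ p.+2)%N%:Z)%:P.
exists (Y + 2 * Y1).
rewrite /Rp (eq_big_nat _ _ (F2 := fun l => oddsq l + ((2 ^ p.+2)%N%:Z)%:P * ((2 * l + 1)%N%:Z)%:P)).
  rewrite HY1 HY (polyC2X p.+1); ring.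
move=> l /andP [_ hl]; rewrite /oddsq -polyCM -PoszM.
have -> : ((2 * l + 1) * (2 ^ p.+2 - (2 * l + 1)))%N%:Z =
   - ((2 * l + 1) ^ 2)%N%:Z + (2 ^ p.+2 * (2 * l + 1))%N%:Z.
  rewrite addrC subzn; first by congr Posz; rewrite mulnBr mulnC; lia.
  rewrite !expnS; move: hl; set x := (2 ^ p)%N => hl; nia.
by rewrite polyCD polyCN; ring.
Qed.

Lemma ex_m1 : xv 0 (-1).
Proof. by split. Qed.
Lemma ex_sign k : xv 0 ((-1) ^+ k).
Proof.
elim: k => [|k IH]; first by split.
by rewrite exprS; have := exM ex_m1 IH.
Qed.

Lemma coef_Xm1 K b : (('X - 1) ^+ K)`_b = (-1) ^+ (K - b) * ('C(K, b))%:Z :> int.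
Proof.
have -> : ('X - 1 : {poly int}) = 'X + (-1)%:P by rewrite polyCN.
by rewrite coef_XaddC_exp -mulr_natr natz.
Qed.

Lemma dv_pow2 e k : (e <= k)%N -> dv e (2 ^ k)%N%:Z.
Proof. by move=> h; rewrite dv_nat ?expn_gt0 // pfactorK. Qed.

Lemma Rval p b : (0 < b <= 2 ^ p)%N -> xv (p - logn 2 b) (Rp p)`_b.
Proof.
move=> hb; have [Y ->] := R_cong p.
rewrite coefD coefCM coef_Xm1; apply: exD.
  have h := logn_bin2p hb.
  have -> : (p - logn 2 b = 0 + logn 2 'C(2 ^ p, b))%N by lia.
  apply: exM (ex_sign _) (ex_nat _).
  by rewrite bin_gt0; case/andP: hb.
by apply: dvMl; apply: dv_pow2; lia.
Qed.

Lemma Rval0 p : xv 0 (Rp p)`_0.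
Proof.
have [Y ->] := R_cong p.
rewrite coefD coefCM coef_Xm1 bin0 mulr1; apply: exD (ex_sign _) _.
by apply: dvMl; apply: dv_pow2.
Qed.

Lemma Rbig p b : (2 ^ p < b)%N -> (Rp p)`_b = 0.
Proof.
move=> h; rewrite /Rp coef_prod_XaddC_big // size_iota subn0 //.
Qed.

Lemma ex_4X k : xv (2 * k) ((4 : int) ^+ k).
Proof.
elim: k => [|k IH]; first by split.
rewrite exprS mulnS; have h4 : xv 2 (4 : int) by split.
exact: exM h4 IH.
Qed.

Lemma size_iota1 m : size (index_iota 1 m) = (m - 1)%N.
Proof. by rewrite size_iota. Qed.

Lemma E_coef p a : (a < 2 ^ p)%N -> (Ep p)`_a = (4 : int) ^+ (2 ^ p - 1 - a) * (Sp p)`_a.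
Proof.
move=> ha; rewrite /Ep /Sp coef_scale ?size_iota1 //; lia.
Qed.

Lemma E_big p a : (2 ^ p <= a)%N -> (Ep p)`_a = 0.
Proof. by move=> h; rewrite /Ep coef_prod_XaddC_big // size_iota1; lia. Qed.

Lemma S_big p a : (2 ^ p <= a)%N -> (Sp p)`_a = 0.
Proof. by move=> h; rewrite /Sp coef_prod_XaddC_big // size_iota1; lia. Qed.

Lemma T0 : T 0 = 0%N.
Proof. by rewrite /T /g /dev /lg trunc_log1. Qed.


Lemma ex_dvW e f x : xv e x -> (f <= e)%N -> dv f x.
Proof. by move=> /ex_dv h fe; apply: dvW fe h. Qed.

Lemma Sval p s : (s < 2 ^ p)%N ->
  exists e, xv e (Sp p)`_s /\ (e + 2 * p.+1 * s.+1 = 2 ^ p.+1 + T s)%N.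
Proof.
elim: p s => [|p IH] s hs.
  have -> : s = 0%N by move: hs; rewrite expn0; lia.
  by exists 0%N; rewrite /Sp big_geq // coef1 T0; split.
have K0 : (0 < 2 ^ p)%N := expn_gt0 2 p.
have eK1 : (2 ^ p.+1 = 2 * 2 ^ p)%N by rewrite expnS.
have eK2 : (2 ^ p.+2 = 4 * 2 ^ p)%N by rewrite !expnS; lia.
rewrite S_split coefM.
case: (ltnP s (2 ^ p)) => hsK.
  have [es [hes ees]] := IH s hsK.
  exists (2 * (2 ^ p - 1 - s) + es)%N; split; last by lia.
  rewrite -[X in xv X _]addn0.
  apply: (ex_sum (j := Ordinal (ltnSn s))); rewrite /= ?subnn.
    rewrite E_coef //; apply: exM (Rval0 p); exact: exM (ex_4X _) hes.
  move=> j; rewrite -val_eqE /= => hj.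
  have jlt : (j < s)%N by have := ltn_ord j; rewrite ltnS leq_eqVlt (negPf hj).
  have [ej [hej eej]] := IH j (ltn_trans jlt hsK).
  set b := (s - j)%N.
  have hb : (0 < b <= 2 ^ p)%N by rewrite /b; lia.
  have hterm := exM (exM (ex_4X (2 ^ p - 1 - j)) hej) (Rval hb).
  rewrite E_coef; last by lia.
  apply: ex_dvW hterm _.
  have hi := @ineq_bot p s b hsK; rewrite /b in hi *.
  have : (0 < s - j <= s)%N by lia.
  move=> /hi; rewrite subKn; last by lia.
  lia.
have hsK2 : (s < 2 * 2 ^ p)%N by rewrite -eK1.
have hK1 : (2 ^ p - 1 < 2 ^ p)%N by lia.
have [eA [heA eeA]] := IH _ hK1.
set b0 := (s - (2 ^ p - 1))%N.
have hb0 : (0 < b0 <= 2 ^ p)%N by rewrite /b0; lia.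
exists (eA + (p - logn 2 b0))%N; split.
  have jlt : (2 ^ p - 1 < s.+1)%N by lia.
  rewrite -[X in xv X _]add0n.
  apply: (ex_sum (j := Ordinal jlt)); rewrite /=.
    rewrite E_coef // subnn expr0 mul1r -[X in xv X _]add0n.
    exact: exM heA (Rval hb0).
  move=> j; rewrite -val_eqE /= => hj.
  case: (ltnP j (2 ^ p)) => hjK; last by rewrite E_big // mul0r; exact: dv0.
  have jlt2 : (j < 2 ^ p - 1)%N by rewrite ltn_neqAle hj /=; lia.
  have [ej [hej eej]] := IH j hjK.
  have js : (j <= s)%N by have := ltn_ord j; lia.
  set b := (s - j)%N.
  case: (ltnP (2 ^ p) b) => hbK; first by rewrite Rbig // mulr0; exact: dv0.
  have hb : (0 < b <= 2 ^ p)%N by rewrite /b; lia.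
  have hterm := exM (exM (ex_4X (2 ^ p - 1 - j)) hej) (Rval hb).
  rewrite E_coef //.
  apply: ex_dvW hterm _.
  have hi := @ineq_topstr p j b jlt2.
  have he := @ineq_topeq p b0 hb0.
  have e1 : (j + b = s)%N by rewrite /b; lia.
  have e2 : (2 ^ p - 1 + b0 = s)%N by rewrite /b0; lia.
  rewrite e1 in hi; rewrite e2 in he.
  have : (2 ^ p - 1 < s)%N by lia.
  move=> /hi /(_ hbK); rewrite he; lia.
have he := @ineq_topeq p b0 hb0.
have e2 : (2 ^ p - 1 + b0 = s)%N by rewrite /b0; lia.
rewrite e2 in he.
have e3 : ((2 ^ p - 1).+1 = 2 ^ p)%N by lia.
rewrite e3 in eeA.
lia.
Qed.

Definition Ev p i := (2 ^ p.+1 + T i - 2 * p.+1 * i.+1)%N.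

Lemma Sval' p s : (s < 2 ^ p)%N ->
  xv (Ev p s) (Sp p)`_s /\ (2 * p.+1 * s.+1 <= 2 ^ p.+1 + T s)%N.
Proof.
move=> hs; have [e [he ee]] := Sval hs.
have -> : Ev p s = e by rewrite /Ev; lia.
by split => //; lia.
Qed.

Lemma T_incr s t : (s <= t)%N -> (T s + 4 * (t - s) <= T t)%N.
Proof.
move=> /subnK <-; elim: (t - s)%N => [|d IH]; first by rewrite add0n subnn muln0 addn0.
rewrite addnK in IH; rewrite addnK; have := T_S (d + s); rewrite addSn; lia.
Qed.


Definition Fl (i : nat) : {poly int} := 'X + (i%:Z)%:P.
Definition Dp p : {poly int} := \prod_(i < 2 ^ p.+1) Fl i.+1.
Definition qN p : {poly int} := 'X ^+ 2 + ((2 ^ p.+1)%N%:Z)%:P * 'X.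

Lemma D_pair p :
  Dp p = Fl (2 ^ p.+1) * Fl (2 ^ p) * (Sp p \Po qN p).
Proof.
set N := (2 ^ p.+1)%N; set M := (2 ^ p)%N.
have M0 : (0 < M)%N := expn_gt0 2 p.
have eN : N = (2 * M)%N by rewrite /N expnS.
have eD : Dp p = \prod_(1 <= i < N.+1) Fl i by rewrite big_add1 /= big_mkord.
rewrite eD.
rewrite (@big_cat_nat _ _ _ M) /=; [|lia|lia].
rewrite (@big_cat_nat _ _ _ M.+1 M) /=; [|lia|lia].
rewrite (@big_cat_nat _ _ _ N M.+1) /=; [|lia|lia].
rewrite big_nat1 big_nat1.
have E3 : \prod_(M.+1 <= i < N) Fl i = \prod_(1 <= i < M) Fl (N - i).
  rewrite big_nat_rev /= -(add1n M) big_addn.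
  have -> : (N - M = M)%N by lia.
  by apply: eq_big_nat => i /andP [h1 h2]; congr Fl; lia.
rewrite E3 /Sp rmorph_prod /= -/N -/M.
have -> : \prod_(1 <= i < M) ('X + ((i * (N - i))%N%:Z)%:P \Po qN p) =
   \prod_(1 <= i < M) (Fl i * Fl (N - i)).
  apply: eq_big_nat => i /andP [h1 h2].
  rewrite comp_polyD comp_polyX comp_polyC /qN /Fl -/N.
  have -> : ((i * (N - i))%N%:Z) = i%:Z * N%:Z - i%:Z * i%:Z.
    by rewrite -!PoszM subzn ?mulnBr //; apply: leq_mul => //; lia.
  rewrite -subzn; last by lia.
  rewrite !polyCB !polyCM; ring.
rewrite big_split /=; ring.
Qed.

Lemma size_Sp p : size (Sp p) = (2 ^ p)%N.
Proof. rewrite /Sp size_prod_XaddC size_iota; have := expn_gt0 2 p; lia. Qed.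

Lemma coef_qN p i m : ((qN p) ^+ i)`_m =
  if (m < i)%N then 0 else ((2 ^ p.+1)%N%:Z) ^+ (i - (m - i)) *+ 'C(i, m - i).
Proof.
have -> : qN p = 'X * ('X + ((2 ^ p.+1)%N%:Z)%:P) by rewrite /qN; ring.
by rewrite exprMn coefXnM coef_XaddC_exp.
Qed.

Lemma dv0n x : dv 0 x.
Proof. by rewrite /dv expn0 dvdzE dvd1n. Qed.

Lemma dvX e x k : dv e x -> dv (e * k) (x ^+ k).
Proof.
move=> h; elim: k => [|k IH]; first by rewrite muln0; exact: dv0n.
by rewrite exprS mulnS; apply: dvM.
Qed.

Lemma phi_coef p m : (Sp p \Po qN p)`_m = \sum_(i < 2 ^ p) (Sp p)`_i * ((qN p) ^+ i)`_m.
Proof.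
rewrite coef_comp_poly -(big_mkord xpredT (fun i => (Sp p)`_i * ((qN p) ^+ i)`_m)).
by rewrite size_Sp big_mkord.
Qed.

Lemma phi_term_dv p i m L : (i < 2 ^ p)%N ->
  ((i <= m <= 2 * i)%N -> (L <= Ev p i + p.+1 * (2 * i - m))%N) ->
  dv L ((Sp p)`_i * ((qN p) ^+ i)`_m).
Proof.
move=> hi hL; rewrite coef_qN.
case: (ltnP m i) => hmi; first by rewrite mulr0; exact: dv0.
case: (ltnP (2 * i) m) => h2.
  by rewrite bin_small ?mulr0n ?mulr0; [exact: dv0| lia].
have := hL; rewrite hmi h2 => /(_ isT) hL'.
apply: dvW hL' _; apply: dvM; first by apply: ex_dv; case: (Sval' hi).
have -> : (i - (m - i) = 2 * i - m)%N by lia.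
rewrite -mulr_natr; apply: dvMl; apply: dvX; exact: dv_pow2.
Qed.

Lemma phi_dv p m L :
  (forall i, (i < 2 ^ p)%N -> (i <= m <= 2 * i)%N -> (L <= Ev p i + p.+1 * (2 * i - m))%N) ->
  dv L (Sp p \Po qN p)`_m.
Proof.
move=> h; rewrite phi_coef; apply: dv_sum => i _.
by apply: phi_term_dv => //; apply: h.
Qed.

Lemma Ev_ok p i : (i < 2 ^ p)%N -> (2 * p.+1 * i.+1 <= 2 ^ p.+1 + T i)%N.
Proof. by move=> h; case: (Sval' h). Qed.

Lemma ar_a p s i : (s < i)%N -> (i < 2 ^ p)%N ->
  ((Ev p s).+1 <= Ev p i + p.+1 * (2 * i - 2 * s))%N.
Proof.
move=> si ip; have hs := Ev_ok (ltn_trans si ip); have hi := Ev_ok ip.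
have ht := T_incr (ltnW si).
rewrite /Ev mulnBr.
have eA : (2 * p.+1 * s.+1 = p.+1 * (2 * s) + 2 * p.+1)%N by ring.
have eB : (2 * p.+1 * i.+1 = p.+1 * (2 * i) + 2 * p.+1)%N by ring.
have CD : (p.+1 * (2 * s) <= p.+1 * (2 * i))%N by apply: leq_mul => //; lia.
rewrite eA eB in hs hi *.
move: hs hi CD; generalize (p.+1 * (2 * s))%N (p.+1 * (2 * i))%N (2 ^ p.+1)%N => a b c.
lia.
Qed.


Lemma phi_even p s : (s < 2 ^ p)%N -> xv (Ev p s) (Sp p \Po qN p)`_(2 * s).
Proof.
move=> hs; rewrite phi_coef; apply: (ex_sum (j := Ordinal hs)).
  rewrite coef_qN /=.
  have -> : (2 * s < s)%N = false by apply/negbTE; rewrite -leqNgt; lia.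
  have -> : (s - (2 * s - s) = 0)%N by lia.
  have -> : (2 * s - s = s)%N by lia.
  rewrite expr0 binn mulr1n mulr1; by case: (Sval' hs).
move=> i; rewrite -val_eqE /= => his.
apply: phi_term_dv => // /andP [h1 h2].
apply: ar_a => //; rewrite ltn_neqAle eq_sym his /=; lia.
Qed.

Lemma Ev_plus p i m : (i < 2 ^ p)%N -> (m <= 2 * i)%N ->
  (Ev p i + p.+1 * (2 * i - m) + p.+1 * m + 2 * p.+1 = 2 ^ p.+1 + T i)%N.
Proof.
move=> hi hm; have h := Ev_ok hi; rewrite /Ev mulnBr.
have eB : (2 * p.+1 * i.+1 = p.+1 * (2 * i) + 2 * p.+1)%N by ring.
have CD : (p.+1 * m <= p.+1 * (2 * i))%N by apply: leq_mul.
rewrite eB in h *.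
move: h CD; generalize (p.+1 * m)%N (p.+1 * (2 * i))%N (2 ^ p.+1)%N (T i) => a b c t.
lia.
Qed.

Lemma Ev_s p s : (s < 2 ^ p)%N -> (Ev p s + p.+1 * (2 * s) + 2 * p.+1 = 2 ^ p.+1 + T s)%N.
Proof.
move=> hs; have := Ev_plus hs (leqnn (2 * s)); rewrite subnn muln0 addn0 => h; lia.
Qed.

Lemma ar_b1 p t i : (i < 2 ^ p)%N -> (t.+1 <= i)%N -> (2 * t + 1 <= 2 * i)%N ->
  ((p + Ev p t.+1).+1 <= Ev p i + p.+1 * (2 * i - (2 * t + 1)))%N.
Proof.
move=> hi ti hm.
have h1 := Ev_plus hi hm.
have h2 := Ev_s (leq_ltn_trans ti hi).
have ht := T_incr ti.
have e : (p.+1 * (2 * t.+1) = p.+1 * (2 * t + 1) + p.+1)%N by ring.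
rewrite e in h2.
move: h1 h2 ht; generalize (p.+1 * (2 * i - (2 * t + 1)))%N (p.+1 * (2 * t + 1))%N (2 ^ p.+1)%N (T i) (T t.+1) (Ev p i) (Ev p t.+1) => a b c d f g h ? ? ?.

lia.
Qed.

Lemma ar_b2 p s i : (i < 2 ^ p)%N -> (s < i)%N -> (2 * s + 1 <= 2 * i)%N ->
  (Ev p s - p <= Ev p i + p.+1 * (2 * i - (2 * s + 1)))%N.
Proof.
move=> hi si hm.
have h1 := Ev_plus hi hm.
have h2 := Ev_s (ltn_trans si hi).
have ht := T_incr (ltnW si).
have e : (p.+1 * (2 * s + 1) = p.+1 * (2 * s) + p.+1)%N by ring.
rewrite e in h1.
have k1 : (1 <= i - s)%N by lia.
move: h1 h2 ht k1; generalize (p.+1 * (2 * i - (2 * s + 1)))%N (p.+1 * (2 * s))%N (2 ^ p.+1)%N (T i) (T s) (Ev p i) (Ev p s) (i - s)%N => a b c d f g h k ? ? ? ?.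
lia.
Qed.

Lemma ar_c1 p s i : (i < 2 ^ p)%N -> (s < i)%N -> (2 * s + 1 <= 2 * i)%N ->
  ((Ev p s).+1 - p <= Ev p i + p.+1 * (2 * i - (2 * s + 1)))%N.
Proof.
move=> hi si hm.
have h1 := Ev_plus hi hm.
have h2 := Ev_s (ltn_trans si hi).
have ht := T_incr (ltnW si).
have e : (p.+1 * (2 * s + 1) = p.+1 * (2 * s) + p.+1)%N by ring.
rewrite e in h1.
have k1 : (1 <= i - s)%N by lia.
move: h1 h2 ht k1; generalize (p.+1 * (2 * i - (2 * s + 1)))%N (p.+1 * (2 * s))%N (2 ^ p.+1)%N (T i) (T s) (Ev p i) (Ev p s) (i - s)%N => a b c d f g h k ? ? ? ?.
lia.
Qed.

Lemma ar_c2 p s i : (i < 2 ^ p)%N -> (s < i)%N -> (2 * s + 2 <= 2 * i)%N ->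
  (Ev p s - 2 * p <= Ev p i + p.+1 * (2 * i - (2 * s + 2)))%N.
Proof.
move=> hi si hm.
have h1 := Ev_plus hi hm.
have h2 := Ev_s (ltn_trans si hi).
have ht := T_incr (ltnW si).
have e : (p.+1 * (2 * s + 2) = p.+1 * (2 * s) + 2 * p.+1)%N by ring.
rewrite e in h1.
have k1 : (1 <= i - s)%N by lia.
move: h1 h2 ht k1; generalize (p.+1 * (2 * i - (2 * s + 2)))%N (p.+1 * (2 * s))%N (2 ^ p.+1)%N (T i) (T s) (Ev p i) (Ev p s) (i - s)%N => a b c d f g h k ? ? ? ?.
lia.
Qed.

Definition phi p := Sp p \Po qN p.

Lemma D_coef p k : (Dp p)`_k =
  (if (k < 2)%N then 0 else (phi p)`_(k - 2)) +
  (3 * (2 ^ p)%N%:Z) * (if k == 0%N then 0 else (phi p)`_k.-1) +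
  (2 * ((2 ^ p)%N%:Z) ^+ 2) * (phi p)`_k.
Proof.
rewrite D_pair -/(phi p).
have -> : Fl (2 ^ p.+1) * Fl (2 ^ p) =
   'X ^+ 2 + (3 * (2 ^ p)%N%:Z)%:P * 'X + (2 * ((2 ^ p)%N%:Z) ^+ 2)%:P.
  rewrite /Fl expnS PoszM !polyCM.
  have c2 : (2%Z)%:P = 2 :> {poly int} by rewrite -polyC_natr.
  have c3 : (3 : int)%:P = 3 :> {poly int} by rewrite -polyC_natr.
  rewrite c2 c3; ring.
set a := (3 * (2 ^ p)%N%:Z). set b := (2 * ((2 ^ p)%N%:Z) ^+ 2).
rewrite mulrDl mulrDl !coefD coefXnM -mulrA !coefCM coefXM.
by case: k => [|[|k]].
Qed.

Lemma ex_mid e x y z : xv e y -> dv e.+1 x -> dv e.+1 z -> xv e (x + y + z).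
Proof.
move=> hy hx hz; rewrite [x + y]addrC -addrA; apply: exD hy _; exact: dvD.
Qed.
Lemma ex_first e x y z : xv e x -> dv e.+1 y -> dv e.+1 z -> xv e (x + y + z).
Proof. by move=> hx hy hz; rewrite -addrA; apply: exD hx _; exact: dvD. Qed.

Lemma ex_a p : xv p (3 * (2 ^ p)%N%:Z).
Proof.
have h3 : xv 0 (3 : int) by split.
have := exM h3 (ex_nat (expn_gt0 2 p)); rewrite pfactorK //.
Qed.

Lemma ex_b p : xv (2 * p).+1 (2 * ((2 ^ p)%N%:Z) ^+ 2).
Proof.
have h2 : xv 1 (2 : int) by split.
have hx := ex_nat (expn_gt0 2 p); rewrite pfactorK // in hx.
rewrite expr2; have := exM h2 (exM hx hx).
by rewrite add1n addnn -mul2n.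
Qed.

Lemma d_odd p s : (s < 2 ^ p)%N -> xv (p + Ev p s) (Dp p)`_(2 * s + 1).
Proof.
move=> hs; rewrite D_coef.
have -> : (2 * s + 1 < 2)%N = (s == 0%N) by apply/idP/idP; lia.
have -> : (2 * s + 1 == 0)%N = false by rewrite addn1.
rewrite addn1 /=.
apply: ex_mid.
- exact: exM (ex_a p) (phi_even hs).
- case: s hs => [|t] hs; first exact: dv0.
  have -> : ((2 * t.+1).+1 - 2 = 2 * t + 1)%N by lia.
  apply: phi_dv => i hi /andP [h1 h2].
  have ti : (t.+1 <= i)%N by lia.
  exact: ar_b1.
- apply: dvW (dvM (ex_dv (ex_b p)) (phi_dv (m := (2 * s).+1) (L := (Ev p s - p)%N) _)).
    lia.
  move=> i hi /andP [h1 h2].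
  have := @ar_b2 p s i hi; rewrite addn1 => h; apply: h; lia.
Qed.

Lemma d_even p s : (s < 2 ^ p)%N -> xv (Ev p s) (Dp p)`_(2 * s + 2).
Proof.
move=> hs; rewrite D_coef.
have -> : (2 * s + 2 < 2)%N = false by lia.
have -> : (2 * s + 2 == 0)%N = false by rewrite addn2.
rewrite /=.
have -> : (2 * s + 2 - 2 = 2 * s)%N by lia.
apply: ex_first.
- exact: phi_even.
- apply: dvW (dvM (ex_dv (ex_a p)) (phi_dv (m := (2 * s + 2).-1) (L := ((Ev p s).+1 - p)%N) _)).
    lia.
  move=> i hi /andP [h1 h2].
  have -> : ((2 * s + 2).-1 = 2 * s + 1)%N by lia.
  apply: ar_c1 => //; lia.
- apply: dvW (dvM (ex_dv (ex_b p)) (phi_dv (m := (2 * s + 2)) (L := (Ev p s - 2 * p)%N) _)).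
    lia.
  move=> i hi /andP [h1 h2].
  apply: ar_c2 => //; lia.
Qed.

Lemma d_zero p : xv ((2 * p).+1 + Ev p 0) (Dp p)`_0.
Proof.
rewrite D_coef /= mulr0 !add0r.
have := phi_even (expn_gt0 2 p); rewrite muln0 => h.
exact: exM (ex_b p) h.
Qed.


Definition cc N (i : 'I_N) : rat := ((i.+1)%:R)^-1.
Definition Fq N : {poly rat} := \prod_(i < N) ((cc i)%:P * 'X + 1).

Lemma F_coef N k : (Fq N)`_k = H N k.
Proof.
rewrite /Fq bigA_distr coef_sum /H.
rewrite [RHS]big_mkcond /=; apply: eq_bigr => J _.
rewrite -big_mkcond /= big_split /= prodr_const -rmorph_prod /= coefCM coefXn.
by rewrite eq_sym; case: eqP => _; rewrite ?mulr1 ?mulr0.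
Qed.

Lemma F_D p : Fq (2 ^ p.+1) = (\prod_(i < 2 ^ p.+1) cc i)%:P * map_poly intr (Dp p).
Proof.
rewrite /Dp rmorph_prod rmorph_prod -big_split /=; apply: eq_bigr => i _.
rewrite /Fl map_polyXaddC /cc mulrDr -polyCM /=.
have -> : ((Posz i.+1)%:~R : rat) = i.+1%:R by rewrite pmulrn.
rewrite mulVf ?polyC1 //.
by rewrite pnatr_eq0.
Qed.

Lemma Fq0 N : (Fq N)`_0 = 1.
Proof.
rewrite -horner_coef0 /Fq horner_prod; apply: big1 => i _.
by rewrite hornerD hornerMX hornerC mulr0 add0r hornerC.
Qed.

Lemma H_ratio p k : H (2 ^ p.+1) k = ((Dp p)`_k)%:~R / ((Dp p)`_0)%:~R.
Proof.
have h0 := Fq0 (2 ^ p.+1); rewrite F_D coefCM coef_map /= in h0.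
rewrite -F_coef F_D coefCM coef_map /=.
have d0 : ((Dp p)`_0)%:~R != 0 :> rat.
  by apply: contra_eq_neq h0 => ->; rewrite mulr0 eq_sym oner_neq0.
set c := \prod_(i < 2 ^ p.+1) cc i in h0 *.
have hc : c = ((Dp p)`_0)%:~R^-1.
  by have := congr1 (fun z => z / ((Dp p)`_0)%:~R) h0; rewrite /= -mulrA divff // mulr1 mul1r.
by rewrite hc mulrC.
Qed.

Lemma lvM x y : x != 0 -> y != 0 -> lv (x * y) = (lv x + lv y)%N.
Proof. by move=> x0 y0; rewrite /lv abszM lognM // absz_gt0. Qed.

Lemma v2_div (a b : int) : a != 0 -> b != 0 ->
  v2 (a%:~R / b%:~R) = (lv a)%:Z - (lv b)%:Z.
Proof.
move=> a0 b0; set x : rat := a%:~R / b%:~R.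
have bR : (b%:~R : rat) != 0 by rewrite intr_eq0.
have x0 : x != 0 by rewrite /x mulf_neq0 ?invr_eq0 // intr_eq0.
have e : numq x * b = a * denq x.
  apply: (@intr_inj rat); rewrite !rmorphM /= numqE /x.
  by rewrite -mulrA (mulrC _ b%:~R) mulrA mulrVK // mulrC.
have hn : numq x != 0 by rewrite numq_eq0.
have hd : denq x != 0 by rewrite denq_neq0.
have := congr1 lv e; rewrite !lvM // => h.
rewrite /v2 -/(lv (numq x)) -/(lv (denq x)).
lia.
Qed.



End PS.
Import PS.

Theorem corollary1p5 (n k : nat) :
  (0 < n)%N -> (0 < k)%N -> (k <= 2 ^ n)%N ->
  v2 (H (2 ^ n) k) <= - (n%:Z).
Proof.
case: n => [|p] // _ k0 kn.
rewrite H_ratio.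
have [h0nz h0lv] := d_zero p.
set s := (k.-1 %/ 2)%N.
have eK : (2 ^ p.+1 = 2 * 2 ^ p)%N by rewrite expnS.
have hs : (s < 2 ^ p)%N by rewrite /s; lia.
have Ts := T_bound (n := p.+1) (ltn0Sn p) hs.
have ok := Ev_ok hs.
have E0 : Ev p 0 = (2 ^ p.+1 - 2 * p.+1)%N by rewrite /Ev T0 addn0 muln1.
have ok0 := Ev_ok (expn_gt0 2 p); rewrite T0 in ok0.
have [ek|ek] : k = (2 * s + 1)%N \/ k = (2 * s + 2)%N by rewrite /s; lia.
  have [hnz hlv] := d_odd hs; rewrite -ek in hnz hlv.
  rewrite v2_div // hlv h0lv E0 /Ev.
  lia.
have [hnz hlv] := d_even hs; rewrite -ek in hnz hlv.
rewrite v2_div // hlv h0lv E0 /Ev.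
lia.
Qed.
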